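(* Let $n\ge 1$, let $\mathcal{A},\mathcal{I}\subseteq\{1,\dots,n\}$, and let $H:\mathbb{R}^n_+\to[0,1]$ be given by $$H(\mathbf{y})=\frac{A(\mathbf{y})}{A(\mathbf{y})+B(\mathbf{y})},\qquad A(\mathbf{y})=\Big(\sum_{i\in\mathcal{A}} w_i y_i^{n_i}\Big)^m,\qquad B(\mathbf{y})=K^m\Big(1+\sum_{j\in\mathcal{I}}\Big(\frac{y_j}{K_j}\Big)^{n_j}\Big)^m,$$ where $w_i>0$, $K>0$, $K_j>0$ are constants. Assume that all Hill coefficients satisfy $n_i\ge 1$ and that $m\ge 1$. Then the first derivatives of $H$ are uniformly bounded on $\mathbb{R}^n_+$: there exists $C>0$ such that $$\Big|\frac{\partial H}{\partial y_k}(\mathbf{y})\Big|\le C\qquad\text{for all }k\in\{1,\dots,n\}\text{ and all }\mathbf{y}\in\mathbb{R}^n_+.$$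
   Context: $\mathbb{R}^n_+=[0,\infty)^n$. $\mathcal{A}$ is the set of activator indices and $\mathcal{I}$ the set of inhibitor indices; $n_i$ ($i\in\mathcal{A}\cup\mathcal{I}$) are the Hill coefficients, $m$ is an overall cooperativity coefficient, $w_i$ are weights, $K$ is the half-maximal activation constant and $K_j$ are inhibition constants. Derivatives at boundary points of $\mathbb{R}^n_+$ are understood as one-sided derivatives. *)

(* Defs.v *)
From HB Require Import structures.
From mathcomp Require Import all_boot all_order all_algebra.
From mathcomp Require Import all_classical all_reals all_analysis.
Set Implicit Arguments. Unset Strict Implicit. Unset Printing Implicit Defensive.
Import Order.TTheory GRing.Theory Num.Theory.
Import numFieldNormedType.Exports.
Local Open Scope classical_set_scope.
Local Open Scope ring_scope.

Section Hill.
Variables (R : realType) (n : nat).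

Definition hillA (Aset : {set 'I_n}) (w hc : 'I_n -> R) (m : R)
  (y : 'I_n -> R) : R :=
  (\sum_(i in Aset) w i * (y i `^ hc i)) `^ m.

Definition hillB (Iset : {set 'I_n}) (Kc hc : 'I_n -> R) (m K : R)
  (y : 'I_n -> R) : R :=
  K `^ m * (1 + \sum_(j in Iset) ((y j / Kc j) `^ hc j)) `^ m.

Definition hillH (Aset Iset : {set 'I_n}) (w hc Kc : 'I_n -> R) (m K : R)
  (y : 'I_n -> R) : R :=
  hillA Aset w hc m y / (hillA Aset w hc m y + hillB Iset Kc hc m K y).

(* d is the partial derivative of f w.r.t. y_k at y, taken within R^n_+:
   the difference quotient converges to d as t -> 0 with t <> 0 and
   y_k + t >= 0 (two-sided if y_k > 0, right-sided if y_k = 0). *)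
Definition partial_deriv_nonneg (f : ('I_n -> R) -> R) (y : 'I_n -> R)
  (k : 'I_n) (d : R) : Prop :=
  (fun t : R => (f (fun i => y i + (if i == k then t else 0)) - f y) / t)
    @ within [set t : R | t != 0 /\ 0 <= y k + t] (nbhs (0 : R)) --> d.

End Hill.

(* Main.v *)
Require Import Defs.
From HB Require Import structures.
From mathcomp Require Import all_boot all_order all_algebra.
From mathcomp Require Import all_classical all_reals all_analysis.
From mathcomp Require Import ring lra.
Import Order.TTheory GRing.Theory Num.Theory.
Import numFieldNormedType.Exports.
Local Open Scope classical_set_scope.
Local Open Scope ring_scope.

Set Implicit Arguments. Unset Strict Implicit.


Section Aux.
Variable R : realType.

Definition Ex (r x : R) : R := if r == 1 then x else `|x| `^ r.

Lemma Ex_ge0 r x : 0 <= x -> Ex r x = x `^ r.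
Proof.
move=> x0; rewrite /Ex; case: eqP => [->|_]; first by rewrite powRr1.
by rewrite ger0_norm.
Qed.

Lemma is_derive_comp' (f g : R -> R) (x df dg : R) :
  is_derive x 1 f df -> is_derive (f x) 1 g dg ->
  is_derive x 1 (fun t => g (f t)) (dg * df).
Proof. by move=> Hf Hg; exact: (@is_derive1_comp R g f x dg df). Qed.

Lemma is_derive_mulc (f : R -> R) (x df a : R) :
  is_derive x 1 f df -> is_derive x 1 (fun t => a * f t) (a * df).
Proof.
move=> Hf; have := @is_deriveZ R R R f a x 1 df Hf.
by [].
Qed.

Lemma is_derive_mulcr (f : R -> R) (x df a : R) :
  is_derive x 1 f df -> is_derive x 1 (fun t => f t * a) (df * a).
Proof.
move=> Hf; rewrite mulrC.
have -> : (fun t => f t * a) = (fun t => a * f t) by apply/funext => t; rewrite mulrC.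
exact: is_derive_mulc.
Qed.

Lemma is_derive_div (f g : R -> R) (x df dg : R) : g x != 0 ->
  is_derive x 1 f df -> is_derive x 1 g dg ->
  is_derive x 1 (fun t => f t / g t) ((df * g x - f x * dg) / (g x) ^+ 2).
Proof.
move=> g0 Hf Hg.
have HV := is_deriveV g0 Hg.
have := @is_deriveM R R f (fun y => (g y)^-1) x 1 df _ Hf HV.
have -> : (fun t => f t / g t) = f * (fun y => (g y)^-1) by apply/funext.
move=> H; apply: (is_derive_eq H).
rewrite /GRing.scale /=. field. exact: g0.
Qed.

Lemma is_derive_bigsum (I : finType) (P : pred I) (h : I -> R -> R) (x : R)
  (dh : I -> R) : (forall i, P i -> is_derive x 1 (h i) (dh i)) ->
  is_derive x 1 (fun t => \sum_(i | P i) h i t) (\sum_(i | P i) dh i).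
Proof.
move=> H; rewrite -fct_sumE.
elim/big_rec2: _ => [|i f d Pi Hd]; first exact: is_derive_cst.
apply: is_deriveD; exact: H.
Qed.


Lemma Ex0_cvg r : 1 < r ->
  (fun h : R => h^-1 *: ((Ex r \o shift 0) (h *: 1) - Ex r 0)) @ 0^' --> (0 : R).
Proof.
move=> r1; have rn1 : r != 1 by rewrite gt_eqF.
have r10 : 0 < r - 1 by rewrite subr_gt0.
apply/(cvgr0Pnorm_lt (F := 0^')) => e e0.
have d0 : 0 < e `^ (r - 1)^-1 by apply: powR_gt0.
near=> t.
have t0 : t != 0 by near: t; exact: nbhs_dnbhs_neq.
have td : `|t| < e `^ (r - 1)^-1 by near: t; exact: dnbhs0_lt.
rewrite /= /Ex (negbTE rn1) normr0 powR0 ?gt_eqF ?(lt_trans ltr01) // subr0.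
rewrite -[t%:A]/(t * 1) mulr1 addr0 -[t^-1 *: _]/(t^-1 * _) normrM normrV ?unitfE // (ger0_norm (powR_ge0 _ _)).
have nt0 : 0 < `|t| by rewrite normr_gt0.
rewrite -(mulr_powRB1 (normr_ge0 t) (lt_trans ltr01 r1)) mulKf ?gt_eqF //.
have := @gt0_ltr_powR _ (r - 1) r10 `|t| (e `^ (r - 1)^-1).
rewrite -powRrM mulVf ?gt_eqF // powRr1 ?ltW //; apply => //; by rewrite nnegrE ?normr_ge0 ?ltW.
Unshelve. all: by end_near. Qed.

Lemma is_derive_Ex (r x : R) : 1 <= r -> 0 <= x -> is_derive x 1 (Ex r) (r * x `^ (r - 1)).
Proof.
move=> r1 x0; have [/eqP re1|rn1] := boolP (r == 1).
  have -> : Ex r = id by apply/funext => t; rewrite /Ex re1 eqxx.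
  by rewrite re1 subrr powRr0 mulr1; exact: is_derive_id.
have r1' : 1 < r by rewrite lt_neqAle eq_sym rn1.
have [xp|] := ltP 0 x.
  have D := is_derive1_powR r xp.
  apply: (near_eq_is_derive _ D).
  near=> y; rewrite /Ex (negbTE rn1) ger0_norm //; apply: ltW.
  by near: y; exact: lt_nbhsr.
move=> x0'; have -> : x = 0 by apply/eqP; rewrite eq_le x0 x0'.
rewrite powR0 ?subr_eq0 // mulr0.
have H := (@Ex0_cvg r r1').
split; first by apply/cvg_ex; exists 0.
exact: cvg_lim H.
Unshelve. all: by end_near. Qed.

End Aux.

Section Aux2.
Variable R : realType.

Lemma is_derive_add (f g : R -> R) (x df dg : R) :
  is_derive x 1 f df -> is_derive x 1 g dg ->
  is_derive x 1 (fun t => f t + g t) (df + dg).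
Proof.
move=> Hf Hg; have -> : (fun t => f t + g t) = f + g by apply/funext.
exact: is_deriveD.
Qed.

Lemma is_derive_addc (f : R -> R) (x df a : R) :
  is_derive x 1 f df -> is_derive x 1 (fun t => a + f t) df.
Proof.
move=> Hf; rewrite -[df]add0r; apply: is_derive_add => //; exact: is_derive_cst.
Qed.

Lemma powm1_le (x r : R) : 0 <= x -> 1 <= r -> x `^ (r - 1) <= x `^ r + 1.
Proof.
move=> x0 r1; have [x1|x1] := leP x 1.
  have : x `^ (r - 1) <= 1 `^ (r - 1).
    by apply: ge0_ler_powR => //; rewrite ?nnegrE ?subr_ge0 ?ler01.
  rewrite powR1 => H; apply: (le_trans H); rewrite lerDr; exact: powR_ge0.
have : x `^ (r - 1) <= x `^ r by apply: ler_powR; [exact: ltW | rewrite lerBlDr lerDl ler01].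
move=> H; apply: (le_trans H); rewrite lerDl; exact: ler01.
Qed.

Lemma frac_bound (A B dA dB : R) : 0 <= A -> 0 < B -> 0 <= dA -> 0 <= dB ->
  `|(dA * (A + B) - A * (dA + dB)) / (A + B) ^+ 2| <= dA / (A + B) + dB / B.
Proof.
move=> A0 B0 dA0 dB0.
have s0 : 0 < A + B by apply: ltr_wpDl.
have s20 : 0 < (A + B) ^+ 2 by apply: exprn_gt0.
rewrite normrM normfV (ger0_norm (ltW s20)) ler_pdivrMr //.
have -> : (dA / (A + B) + dB / B) * (A + B) ^+ 2 = dA * (A + B) + dB * ((A + B) ^+ 2 / B).
  by field; rewrite ?gt_eqF.
set q := (A + B) ^+ 2 / B.
have qA : A <= q by rewrite /q ler_pdivlMr //; nra.
rewrite ler_norml; apply/andP; split; nra.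
Qed.

Lemma boundA (X P c Kp : R) : 0 <= X -> 0 < Kp -> 0 <= c -> P <= c * (X + 1) ->
  P / (X + Kp) <= c * (1 + Kp^-1).
Proof.
move=> X0 K0 c0 HP.
have s0 : 0 < X + Kp by apply: ltr_wpDl.
rewrite ler_pdivrMr //.
have iK : 0 < Kp^-1 by rewrite invr_gt0.
have KiK : Kp * Kp^-1 = 1 by rewrite mulfV ?gt_eqF.
apply: (le_trans HP).
have -> : c * (1 + Kp^-1) * (X + Kp) = c * (X + 1) + c * (Kp + X * Kp^-1) by field; rewrite gt_eqF.
rewrite lerDl; apply: mulr_ge0 => //; apply: addr_ge0; [exact: ltW | exact: mulr_ge0 (ltW iK)].
Qed.

End Aux2.

Unset Implicit Arguments. Set Strict Implicit.


Lemma transfer (R : realType) n (f : ('I_n -> R) -> R) (y : 'I_n -> R) (k : 'I_n) (G : R -> R) (d : R) :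
  is_derive (0:R) (1:R) G d ->
  (forall t, 0 <= y k + t -> f (fun i => y i + (if i == k then t else 0)) = G t) ->
  f y = G 0 -> partial_deriv_nonneg f y k d.
Proof.
move=> [dv <-] HG H0.
rewrite /partial_deriv_nonneg.
set D := [set t : R | t != 0 /\ 0 <= y k + t].
have Hc : (fun h : R => h^-1 *: ((G \o shift 0) (h *: 1) - G 0)) @ 0^' --> 'D_1 G 0 := dv.
have Hw : (fun h : R => h^-1 *: ((G \o shift 0) (h *: 1) - G 0)) @ within D (nbhs 0) --> 'D_1 G 0.
  apply: cvg_trans Hc; apply: cvg_app; apply: within_subset => t [] //.
apply: cvg_trans Hw; apply: near_eq_cvg.
rewrite near_withinE; near=> t => -[t0 tk].
rewrite /= HG // H0 addr0 -[t *: 1]/(t * 1) mulr1 -[t^-1 *: _]/(t^-1 * _) mulrC.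
by [].
Unshelve. all: by end_near. Qed.


Lemma key (R : realType) (n : nat) (Aset Iset : {set 'I_n})
  (w hc Kc : 'I_n -> R) (m K : R) :
  (forall i, i \in Aset -> 0 < w i) -> 0 < K ->
  (forall j, j \in Iset -> 0 < Kc j) ->
  (forall i, i \in Aset :|: Iset -> 1 <= hc i) -> 1 <= m ->
  forall (k : 'I_n) (y : 'I_n -> R), (forall i, 0 <= y i) ->
  exists d, partial_deriv_nonneg (hillH Aset Iset w hc Kc m K) y k d /\
   `|d| <= m * `|hc k| * (1 + `|w k|) * (1 + (K `^ m)^-1) + m * `|hc k| / `|Kc k|.
Proof.
move=> wp Kp Kcp hc1 m1 k y y0.
have hA : forall i, i \in Aset -> 1 <= hc i by move=> i iA; apply: hc1; rewrite !inE iA.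
have hI : forall i, i \in Iset -> 1 <= hc i by move=> i iA; apply: hc1; rewrite !inE iA orbT.
pose c i (t : R) := y i + (if i == k then t else 0).
pose dc i : R := if i == k then 1 else 0.
have c0 : forall i, c i 0 = y i by move=> i; rewrite /c; case: (i == k); rewrite addr0.
have Dc : forall i, is_derive (0:R) (1:R) (c i) (dc i).
  move=> i; rewrite /c /dc; case: (i == k).
    by apply: is_derive_addc; exact: is_derive_id.
  have -> : (fun t : R => y i + 0) = cst (y i + 0) by [].
  exact: is_derive_cst.
have cge : forall t, 0 <= y k + t -> forall i, 0 <= c i t.
  move=> t yt i; rewrite /c; case: eqP => [->|_] //; by rewrite addr0.
pose Sf (t : R) := \sum_(i in Aset) w i * Ex (hc i) (c i t).
pose dS := \sum_(i in Aset) w i * (hc i * y i `^ (hc i - 1) * dc i).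
have DS : is_derive (0:R) (1:R) Sf dS.
  apply: is_derive_bigsum => i iA; apply: is_derive_mulc.
  have := is_derive_comp' (Dc i) (is_derive_Ex (hA i iA) (cge 0 _ i)).
  by rewrite c0 addr0; apply.
pose S0 := Sf 0.
have S0e : S0 = \sum_(i in Aset) w i * y i `^ hc i.
  by rewrite /S0 /Sf; apply: eq_bigr => i iA; rewrite c0 Ex_ge0.
have S0ge : 0 <= S0.
  rewrite S0e; apply: sumr_ge0 => i iA; apply: mulr_ge0; [exact: ltW (wp i iA) | exact: powR_ge0].
pose Af (t : R) := Ex m (Sf t).
pose dA := m * S0 `^ (m - 1) * dS.
have DA : is_derive (0:R) (1:R) Af dA.
  by have := is_derive_comp' DS (is_derive_Ex m1 S0ge); apply.
pose Tf (t : R) := 1 + \sum_(j in Iset) Ex (hc j) (c j t / Kc j).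
pose dT := \sum_(j in Iset) hc j * (y j / Kc j) `^ (hc j - 1) * (dc j / Kc j).
have DT : is_derive (0:R) (1:R) Tf dT.
  apply: is_derive_addc; apply: is_derive_bigsum => j jI.
  have := is_derive_comp' (@is_derive_mulcr _ _ _ _ (Kc j)^-1 (Dc j))
    (is_derive_Ex (hI j jI) (divr_ge0 (cge 0 _ j) (ltW (Kcp j jI)))).
  by rewrite c0 addr0; apply.
pose T0 := Tf 0.
have T0e : T0 = 1 + \sum_(j in Iset) (y j / Kc j) `^ hc j.
  rewrite /T0 /Tf; congr (_ + _); apply: eq_bigr => j jI; rewrite c0 Ex_ge0 //.
  exact: divr_ge0 (y0 j) (ltW (Kcp j jI)).
have T0ge1 : 1 <= T0.
  rewrite T0e lerDl; apply: sumr_ge0 => j jI; exact: powR_ge0.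
have T0ge : 0 <= T0 by apply: le_trans T0ge1.
pose Bf (t : R) := K `^ m * Ex m (Tf t).
pose dB := K `^ m * (m * T0 `^ (m - 1) * dT).
have DB : is_derive (0:R) (1:R) Bf dB.
  by apply: is_derive_mulc; have := is_derive_comp' DT (is_derive_Ex m1 T0ge); apply.
pose G (t : R) := Af t / (Af t + Bf t).
pose A0 := Af 0.
pose B0 := Bf 0.
have A0e : A0 = S0 `^ m by rewrite /A0 /Af Ex_ge0.
have B0e : B0 = K `^ m * T0 `^ m by rewrite /B0 /Bf Ex_ge0.
have Km0 : 0 < K `^ m by apply: powR_gt0.
have T0m1 : 1 <= T0 `^ m.
  have := @ge0_ler_powR _ m (le_trans ler01 m1) 1 T0; rewrite powR1; apply => //;
    by rewrite nnegrE.
have B0K : K `^ m <= B0 by rewrite B0e ler_peMr // ltW.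
have B0p : 0 < B0 by apply: lt_le_trans B0K.
have A0ge : 0 <= A0 by rewrite A0e powR_ge0.
have AB0 : A0 + B0 != 0 by rewrite gt_eqF // ltr_wpDl.
have DG := @is_derive_div _ Af (fun t => Af t + Bf t) 0 dA (dA + dB) AB0 DA (is_derive_add DA DB).
exists ((dA * (A0 + B0) - A0 * (dA + dB)) / (A0 + B0) ^+ 2); split.
  have HG : forall t, 0 <= y k + t ->
      hillH Aset Iset w hc Kc m K (fun i => y i + (if i == k then t else 0)) = G t.
    move=> t yt.
    have E1 : Af t = hillA Aset w hc m (fun i => y i + (if i == k then t else 0)).
      rewrite /Af /hillA Ex_ge0.
        by congr (_ `^ _); apply: eq_bigr => i iA; rewrite Ex_ge0 //; exact: cge.
      apply: sumr_ge0 => i iA; apply: mulr_ge0; [exact: ltW (wp i iA)|].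
      by rewrite Ex_ge0 ?powR_ge0 //; exact: cge.
    have E2 : Bf t = hillB Iset Kc hc m K (fun i => y i + (if i == k then t else 0)).
      rewrite /Bf /hillB Ex_ge0.
        by congr (_ * (_ + _) `^ _); apply: eq_bigr => i iA; rewrite Ex_ge0 //;
          apply: divr_ge0 (ltW (Kcp i iA)); exact: cge.
      apply: addr_ge0 => //; apply: sumr_ge0 => i iA.
      by rewrite Ex_ge0 ?powR_ge0 //; apply: divr_ge0 (ltW (Kcp i iA)); exact: cge.
    by rewrite /hillH /G -E1 -E2.
  apply: (@transfer _ _ _ _ _ _ _ DG HG).
  have yk0 : 0 <= y k + 0 by rewrite addr0.
  have H := HG 0 yk0.
  rewrite -[RHS]/(G 0) -H; congr hillH; apply/funext => i; by case: (i == k); rewrite addr0.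
have m0 : 0 < m by apply: lt_le_trans m1.
have dSe : dS = if k \in Aset then w k * (hc k * y k `^ (hc k - 1)) else 0.
  case: ifP => kA.
    rewrite /dS (bigD1 k) //= big1 ?addr0; first by rewrite /dc eqxx mulr1.
    by move=> i /andP [_ ik]; rewrite /dc (negbTE ik) !mulr0.
  rewrite /dS big1 // => i iA; rewrite /dc; case: eqP => [ik|]; last by rewrite !mulr0.
  by rewrite ik kA in iA.
have dTe : dT = if k \in Iset then hc k * (y k / Kc k) `^ (hc k - 1) * (Kc k)^-1 else 0.
  case: ifP => kA.
    rewrite /dT (bigD1 k) //= big1 ?addr0; first by rewrite /dc eqxx mul1r.
    by move=> i /andP [_ ik]; rewrite /dc (negbTE ik) mul0r !mulr0.
  rewrite /dT big1 // => i iA; rewrite /dc; case: eqP => [ik|]; last by rewrite mul0r !mulr0.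
  by rewrite ik kA in iA.
have dSge : 0 <= dS.
  rewrite dSe; case: ifP => kA //; apply: mulr_ge0; first exact: ltW (wp k kA).
  apply: mulr_ge0; [exact: le_trans ler01 (hA k kA) | exact: powR_ge0].
have dTge : 0 <= dT.
  rewrite dTe; case: ifP => kA //; apply: mulr_ge0; last by rewrite invr_ge0 ltW // Kcp.
  apply: mulr_ge0; [exact: le_trans ler01 (hI k kA) | exact: powR_ge0].
have dAge : 0 <= dA by rewrite /dA; apply: mulr_ge0 => //; apply: mulr_ge0; [exact: ltW | exact: powR_ge0].
have dBge : 0 <= dB.
  rewrite /dB; apply: mulr_ge0; first exact: ltW.
  by apply: mulr_ge0 => //; apply: mulr_ge0; [exact: ltW | exact: powR_ge0].
apply: le_trans (frac_bound A0ge B0p dAge dBge) _.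
have hkn : k \in Aset -> `|hc k| = hc k.
  by move=> kA; rewrite ger0_norm // (le_trans ler01 (hA k kA)).
apply: lerD.
  have cc : 0 <= m * `|hc k| * (1 + `|w k|).
    by apply: mulr_ge0; [apply: mulr_ge0 => //; exact: ltW | apply: addr_ge0].
  apply: (@le_trans _ _ (dA / (A0 + K `^ m))).
    rewrite ler_wpM2l // lef_pV2 ?posrE ?ltr_wpDl // ?lerD2l //; exact: ltW.
  apply: boundA => //.
  rewrite A0e.
  case kA: (k \in Aset); last first.
    rewrite /dA dSe kA mulr0; apply: mulr_ge0 => //; apply: addr_ge0 => //; exact: powR_ge0.
  rewrite /dA dSe kA (hkn kA) (ger0_norm (ltW (wp k kA))).
  set Q := S0 `^ (m-1). set P := y k `^ (hc k - 1). set U := y k `^ hc k. set V := S0 `^ m.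
  have QS : S0 * Q = V by exact: mulr_powRB1 S0ge m0.
  have QV : Q <= V + 1 by exact: powm1_le S0ge m1.
  have PU : P <= U + 1 by exact: powm1_le (y0 k) (hA k kA).
  have US : w k * U <= S0.
    rewrite S0e (bigD1 k) //= lerDl; apply: sumr_ge0 => i /andP [iA _].
    apply: mulr_ge0; [exact: ltW (wp i iA) | exact: powR_ge0].
  have Q0 : 0 <= Q by exact: powR_ge0.
  have P0 : 0 <= P by exact: powR_ge0.
  have U0 : 0 <= U by exact: powR_ge0.
  have wk := wp k kA.
  have hk := hA k kA.
  have h1 : w k * (hc k * P) <= hc k * (S0 + w k).
    have H3 : 0 <= hc k by exact: le_trans ler01 hk.
    have H1 : 0 <= (w k * hc k) * (U + 1 - P).
      by apply: mulr_ge0; [apply: mulr_ge0 => //; exact: ltW | rewrite subr_ge0].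
    have H2 : 0 <= hc k * (S0 - w k * U) by apply: mulr_ge0 => //; rewrite subr_ge0.
    nra.
  have h2 : Q * (hc k * (S0 + w k)) <= hc k * (1 + w k) * (V + 1).
    have H1 : 0 <= (hc k * w k) * (V + 1 - Q).
      apply: mulr_ge0; [apply: mulr_ge0; [exact: le_trans ler01 hk | exact: ltW] | by rewrite subr_ge0].
    have H2 : Q * (hc k * (S0 + w k)) = hc k * (S0 * Q) + hc k * w k * Q by ring.
    rewrite H2 QS.
    have H3 : 0 <= hc k by exact: le_trans ler01 hk.
    have H4 : 0 <= V by exact: powR_ge0.
    nra.
  apply: (@le_trans _ _ (m * (Q * (hc k * (S0 + w k))))).
    rewrite -mulrA; apply: ler_wpM2l; [exact: ltW | by apply: ler_wpM2l].
  apply: (@le_trans _ _ (m * (hc k * (1 + w k) * (V + 1)))); last by rewrite !mulrA.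
  by apply: ler_wpM2l => //; exact: ltW.
apply: (@le_trans _ _ (dB / B0)).
  rewrite ler_wpM2l // lef_pV2 ?posrE ?ltr_wpDl // ?lerDr //.
case kI: (k \in Iset); last first.
  rewrite /dB dTe kI !mulr0 mul0r; apply: divr_ge0 => //.
  by apply: mulr_ge0 => //; exact: ltW.
have Kk := Kcp k kI.
have hk := hI k kI.
rewrite (ger0_norm (le_trans ler01 hk)) (gtr0_norm Kk) ler_pdivrMr //.
rewrite /dB dTe kI B0e.
set u := y k / Kc k. set P := u `^ (hc k - 1). set U := u `^ hc k.
set Q := T0 `^ (m - 1). set V := T0 `^ m. set iK := (Kc k)^-1.
have u0 : 0 <= u by apply: divr_ge0 (y0 k) (ltW Kk).
have QT : T0 * Q = V by exact: mulr_powRB1 T0ge m0.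
have PU : P <= U + 1 by exact: powm1_le u0 hk.
have UT : U + 1 <= T0.
  rewrite T0e addrC lerD2l (bigD1 k) //= lerDl; apply: sumr_ge0 => i _; exact: powR_ge0.
have Q0 : 0 <= Q by exact: powR_ge0.
have QP : Q * P <= V by rewrite -QT mulrC; apply: ler_wpM2r => //; exact: le_trans PU UT.
have e1 : K `^ m * (m * Q * (hc k * P * iK)) = (K `^ m * m * hc k * iK) * (Q * P) by ring.
have e2 : m * hc k / Kc k * (K `^ m * V) = (K `^ m * m * hc k * iK) * V by rewrite /iK; ring.
rewrite e1 e2; apply: ler_wpM2l => //.
apply: mulr_ge0; last by rewrite invr_ge0 ltW.
apply: mulr_ge0; last exact: le_trans ler01 hk.
by apply: mulr_ge0; exact: ltW.
Qed.


Theorem proposition1 (R : realType) (n : nat) (Aset Iset : {set 'I_n})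
  (w hc Kc : 'I_n -> R) (m K : R) :
  (0 < n)%N ->
  (forall i, i \in Aset -> 0 < w i) ->
  0 < K ->
  (forall j, j \in Iset -> 0 < Kc j) ->
  (forall i, i \in Aset :|: Iset -> 1 <= hc i) ->
  1 <= m ->
  exists C : R, 0 < C /\
    forall (k : 'I_n) (y : 'I_n -> R), (forall i, 0 <= y i) ->
      exists d : R,
        partial_deriv_nonneg (hillH Aset Iset w hc Kc m K) y k d /\ `|d| <= C.
Proof.
move=> n0 wp Kp Kcp hc1 m1.
pose b (k : 'I_n) := m * `|hc k| * (1 + `|w k|) * (1 + (K `^ m)^-1) + m * `|hc k| / `|Kc k|.
have m0 : 0 < m by apply: lt_le_trans m1.
have b0 : forall k, 0 <= b k.
  move=> k; apply: addr_ge0.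
    apply: mulr_ge0; last by apply: addr_ge0 => //; rewrite invr_ge0 powR_ge0.
    by apply: mulr_ge0; [apply: mulr_ge0 => //; exact: ltW | apply: addr_ge0].
  by apply: divr_ge0 => //; apply: mulr_ge0 => //; exact: ltW.
have s0 : 0 <= \sum_(k < n) b k by apply: sumr_ge0 => k _.
exists (1 + \sum_(k < n) b k); split.
  by apply: (lt_le_trans ltr01); rewrite lerDl.
move=> k y y0.
have [d [Hd Hb]] := @key _ _ _ _ _ _ _ _ _ wp Kp Kcp hc1 m1 k y y0.
exists d; split => //.
apply: (le_trans Hb); rewrite -/(b k).
apply: (@le_trans _ _ (\sum_(k < n) b k)); last by rewrite lerDr.
rewrite (bigD1 k) //= lerDl; exact: sumr_ge0.
Qed.
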